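(* Let $\Delta\in(0,1)$. (i) If $N\ge 8\gamma_{4k}^{-1}\ln(2/\Delta)+12k\ln(2R/\Delta)$ (with $\gamma_{4k}>0$), then with probability at least $1-\Delta$, $$1-\widehat\tau\ge\frac{C}{2}\left[1+\frac{1-\gamma_{4k}}{\gamma_{4k}}\bar C\right]^{-1}(1-\tau).$$ (ii) If $N\ge 3\gamma_{2k}^{-1}\ln(2/\Delta)+16k\ln(2R/\Delta)$ (with $\gamma_{2k}>0$), then with probability at least $1-\Delta$, $$1-\tau\ge\frac{C}{2}\left[1+\frac{1-\widehat\gamma_{4k}}{\widehat\gamma_{4k}}\bar C\right]^{-1}(1-\widehat\tau)$$ (where the right-hand side is read as $0$ if $\widehat\gamma_{4k}=0$).
   Context: Let $R\ge 2$ be an integer and $\rho=(\rho_1,\dots,\rho_R)$ a probability vector with $\rho_r>0$ for all $r$. Let $Y_1,\dots,Y_N$ be i.i.d. labels with $\mathbb P(Y_j=r)=\rho_r$, $N_r=|\{j:Y_j=r\}|$, $\widehat\rho_r=N_r/N$. Fix an integer $k\ge1$. Set $\tau:=1-\sum_{r}\rho_r(1-\rho_r)^k$ and $\widehat\tau:=1-\sum_r\widehat\rho_r(1-\widehat\rho_r)^k$. For $\alpha\ge1$ define $\gamma_\alpha:=\sum_{r:\rho_r\le 1/\alpha}\rho_r$ and $\widehat\gamma_\alpha:=\sum_{r:\widehat\rho_r\le1/\alpha}\widehat\rho_r$. Let $C:=\inf_{k'\ge1}\left(1-\frac{1}{2k'}\right)^{k'}$ and $\bar C:=\sup_{k'\ge1}\left(1-\frac{1}{4k'}\right)^{k'}$,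 the infimum/supremum over positive integers $k'$. *)

(* Defs.v *)
From HB Require Import structures.
From mathcomp Require Import all_boot all_order all_algebra.
From mathcomp Require Import all_classical all_reals exp.
Set Implicit Arguments. Unset Strict Implicit. Unset Printing Implicit Defensive.
Import Order.TTheory GRing.Theory Num.Theory.
Local Open Scope ring_scope.
Local Open Scope classical_set_scope.

Definition tauf {R : realType} {nR : nat} (k : nat) (p : 'I_nR -> R) : R :=
  1 - \sum_(r < nR) p r * (1 - p r) ^+ k.

Definition gammaf {R : realType} {nR : nat} (alpha : R) (p : 'I_nR -> R) : R :=
  \sum_(r < nR | p r <= alpha^-1) p r.

Definition count_lab {nR N : nat} (s : {ffun 'I_N -> 'I_nR}) (r : 'I_nR) : nat :=
  #|[set j | s j == r]|.

Definition rhohat {R : realType} {nR N : nat} (s : {ffun 'I_N -> 'I_nR}) :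
  'I_nR -> R := fun r => (count_lab s r)%:R / N%:R.

Definition iid_prob {R : realType} {nR : nat} (N : nat) (rho : 'I_nR -> R)
  (E : {ffun 'I_N -> 'I_nR} -> Prop) : R :=
  \sum_(s : {ffun 'I_N -> 'I_nR} | `[< E s >]) \prod_(j < N) rho (s j).

Definition Cconst (R : realType) : R :=
  inf [set (1 - (2 * k'%:R)^-1) ^+ k' | k' in [set k' : nat | (0 < k')%N]].
Definition Cbar (R : realType) : R :=
  sup [set (1 - (4 * k'%:R)^-1) ^+ k' | k' in [set k' : nat | (0 < k')%N]].
Arguments iid_prob {R nR} N rho E.

(* Main.v *)
Require Import Defs.
From HB Require Import structures.
From mathcomp Require Import all_boot all_order all_algebra.
From mathcomp Require Import all_classical all_reals exp sequences.
From mathcomp Require Import ring lra.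
Import Order.TTheory GRing.Theory Num.Theory.
Local Open Scope ring_scope.


Lemma sq_lb {R : realType} {y a : R} : 0 <= a -> a <= y -> a * a <= y * y.
Proof. move=> a0 ay; apply: ler_pM => //. Qed.

Lemma sq_ub {R : realType} {y a : R} : 0 <= y -> y <= a -> y * y <= a * a.
Proof. move=> y0 ya; apply: ler_pM => //. Qed.

Lemma exp23_lb (R : realType) : 24/13 <= expR (2/3 : R).
Proof.
have -> : (2/3 : R) = 8%:R * (1/12) by lra.
rewrite expRM_natl.
have h := expR_ge1Dx (1/12 : R).
set x := expR _ in h *.
have x2 : (169/144) <= x ^+ 2.
  rewrite expr2; apply: le_trans (sq_lb _ h); lra.
have x4 : (137/100) <= x ^+ 4.
  rewrite (_ : x ^+ 4 = x ^+ 2 * x ^+ 2); last by rewrite -exprD.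
  apply: le_trans (sq_lb _ x2); lra.
have x8 : (187/100) <= x ^+ 8.
  rewrite (_ : x ^+ 8 = x ^+ 4 * x ^+ 4); last by rewrite -exprD.
  apply: le_trans (sq_lb _ x4); lra.
lra.
Qed.

Lemma exp23_ub (R : realType) : expR (2/3 : R) <= 2.
Proof.
have -> : (2/3 : R) = 16%:R * (1/24) by lra.
rewrite expRM_natl.
have h := expR_ge1Dx (- (1/24) : R).
rewrite expRN in h.
set x := expR _ in h *.
have xp : 0 < x by apply: expR_gt0.
have x1 : x <= 24/23.
  have : 23/24 * x <= x^-1 * x by rewrite ler_pM2r //; lra.
  rewrite mulVf ?gt_eqF //; lra.
have x2 : x ^+ 2 <= 10889/10000.
  rewrite expr2; apply: le_trans (sq_ub _ x1) _; [lra|lra].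
have x4 : x ^+ 4 <= 11858/10000.
  rewrite (_ : x ^+ 4 = x ^+ 2 * x ^+ 2); last by rewrite -exprD.
  apply: le_trans (sq_ub _ x2) _; [by rewrite exprn_ge0 // ltW|lra].
have x8 : x ^+ 8 <= 14062/10000.
  rewrite (_ : x ^+ 8 = x ^+ 4 * x ^+ 4); last by rewrite -exprD.
  apply: le_trans (sq_ub _ x4) _; [by rewrite exprn_ge0 // ltW|lra].
have x16 : x ^+ 16 <= 198/100.
  rewrite (_ : x ^+ 16 = x ^+ 8 * x ^+ 8); last by rewrite -exprD.
  apply: le_trans (sq_ub _ x8) _; [by rewrite exprn_ge0 // ltW|lra].
lra.
Qed.
Definition ind {T : Type} {R : realType} (E : T -> Prop) (s : T) : R :=
  if `[< E s >] then 1 else 0.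

Lemma iid_probE (R : realType) nR N (rho : 'I_nR -> R) E :
  iid_prob N rho E = \sum_(s : {ffun 'I_N -> 'I_nR}) (\prod_(j < N) rho (s j)) * ind E s.
Proof.
rewrite /iid_prob big_mkcond /=; apply: eq_bigr => s _.
by rewrite /ind; case: ifP => _; rewrite ?mulr1 ?mulr0.
Qed.

Lemma iid_prob_le (R : realType) nR N (rho : 'I_nR -> R) E (g : {ffun 'I_N -> 'I_nR} -> R) :
  (forall r, 0 <= rho r) -> (forall s, 0 <= g s) -> (forall s, E s -> 1 <= g s) ->
  iid_prob N rho E <= \sum_(s : {ffun 'I_N -> 'I_nR}) (\prod_(j < N) rho (s j)) * g s.
Proof.
move=> r0 g0 gE; rewrite iid_probE; apply: ler_sum => s _.
apply: ler_wpM2l; first by apply: prodr_ge0.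
rewrite /ind; case: asboolP => [/gE //|_]; exact: g0.
Qed.

Lemma iid_sum_prod (R : realType) nR N (F : 'I_nR -> R) :
  \sum_(s : {ffun 'I_N -> 'I_nR}) \prod_(j < N) F (s j) = (\sum_r F r) ^+ N.
Proof.
rewrite -(bigA_distr_bigA (fun (j : 'I_N) r => F r)) /=.
by rewrite prodr_const card_ord.
Qed.

Lemma iid_prob_total (R : realType) nR N (rho : 'I_nR -> R) :
  \sum_r rho r = 1 ->
  \sum_(s : {ffun 'I_N -> 'I_nR}) \prod_(j < N) rho (s j) = 1.
Proof. by move=> h; rewrite (iid_sum_prod _ _ N rho) h expr1n. Qed.

Lemma mgf_bound (R : realType) nR N (rho : 'I_nR -> R) (f : 'I_nR -> R) (c : R) (E : {ffun 'I_N -> 'I_nR} -> Prop) :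
  (forall r, 0 <= rho r) ->
  (forall s, E s -> c <= \sum_(j < N) f (s j)) ->
  iid_prob N rho E <= expR (-c) * (\sum_r rho r * expR (f r)) ^+ N.
Proof.
move=> r0 hE.
have H := (@iid_prob_le R nR N rho E (fun s => expR (\sum_(j < N) f (s j) - c)) r0).
apply: le_trans (H _ _) _.
- by move=> s; apply: expR_ge0.
- move=> s /hE hc; apply: le_trans (expR_ge1Dx _); rewrite lerDl subr_ge0 //.
rewrite -(iid_sum_prod _ _ N) mulr_sumr; rewrite le_eqVlt; apply/orP; left; apply/eqP; apply: eq_bigr => s _.
rewrite expRD expR_sum big_split /= mulrC; ring.
Qed.

Definition Xc {R : realType} {nR N : nat} (A : pred 'I_nR) (s : {ffun 'I_N -> 'I_nR}) : R :=
  \sum_(j < N) (A (s j))%:R.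

Lemma mgf_sum (R : realType) nR (rho : 'I_nR -> R) (A : pred 'I_nR) (a : R) :
  \sum_r rho r = 1 ->
  \sum_r rho r * expR (a * (A r)%:R) = 1 + (\sum_(r | A r) rho r) * (expR a - 1).
Proof.
move=> h1.
have -> : \sum_r rho r * expR (a * (A r)%:R) =
    \sum_r (rho r + (if A r then rho r * (expR a - 1) else 0)).
  apply: eq_bigr => r _; case: (A r); rewrite /= ?mulr1 ?mulr0 ?expR0 ?addr0; ring.
by rewrite big_split /= h1 -big_mkcond mulr_suml.
Qed.

Lemma pow_exp_bound (R : realType) (y : R) N : 0 <= 1 + y ->
  (1 + y) ^+ N <= expR (N%:R * y).
Proof.
move=> h; rewrite expRM_natl; apply: lerXn2r; rewrite ?nnegrE ?expR_ge0 //.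
exact: expR_ge1Dx.
Qed.

Lemma chernoff_up (R : realType) nR N (rho : 'I_nR -> R) (A : pred 'I_nR) (m : R) :
  (forall r, 0 <= rho r) -> \sum_r rho r = 1 -> 0 <= m ->
  N%:R * (\sum_(r | A r) rho r) <= m ->
  iid_prob N rho (fun s => 2 * m <= Xc A s) <= expR (- (m / 3)).
Proof.
move=> r0 h1 m0 hm.
set t : R := 2/3.
apply: le_trans (@mgf_bound R nR N rho (fun r => t * (A r)%:R) (t * (2 * m)) _ r0 _) _.
  move=> s hs; rewrite -mulr_sumr; apply: ler_wpM2l; first by rewrite /t; lra.
  exact: hs.
rewrite mgf_sum //.
set p := \sum_(r | A r) rho r in hm *.
have p0 : 0 <= p by apply: sumr_ge0.
have et1 : 1 <= expR t by have := expR_ge1Dx t; rewrite /t; lra.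
have et2 : expR t <= 2 by apply: exp23_ub.
have hpb : 0 <= 1 + p * (expR t - 1).
  have : 0 <= p * (expR t - 1) by apply: mulr_ge0; lra.
  lra.
apply: le_trans (ler_wpM2l (expR_ge0 _) (@pow_exp_bound R _ N hpb)) _.
rewrite -expRD ler_expR.
have : N%:R * (p * (expR t - 1)) <= m * (expR t - 1).
  rewrite mulrA; apply: ler_wpM2r => //; lra.
have : m * (expR t - 1) <= m * 1 by apply: ler_wpM2l => //; lra.
have ht : t = 2/3 by [].
rewrite -/t (_ : t * (2 * m) = 4/3 * m); last by rewrite /t; ring.
lra.
Qed.

Lemma chernoff_low (R : realType) nR N (rho : 'I_nR -> R) (A : pred 'I_nR) :
  (forall r, 0 <= rho r) -> \sum_r rho r = 1 ->
  iid_prob N rho (fun s => Xc A s <= N%:R * (\sum_(r | A r) rho r) / 2)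
    <= expR (- (N%:R * (\sum_(r | A r) rho r) / 8)).
Proof.
move=> r0 h1.
set p := \sum_(r | A r) rho r.
set mu := N%:R * p.
have p0 : 0 <= p by apply: sumr_ge0.
have mu0 : 0 <= mu by apply: mulr_ge0.
set t : R := 2/3.
apply: le_trans (@mgf_bound R nR N rho (fun r => - t * (A r)%:R) (- t * (mu / 2)) _ r0 _) _.
  move=> s hs; rewrite -mulr_sumr -/(Xc A s) !mulNr lerN2; apply: ler_wpM2l; first by rewrite /t; lra.
  exact: hs.
rewrite mgf_sum //.
have et1 : expR (- t) <= 13/24.
  rewrite expRN; have := exp23_lb R; rewrite -/t => h.
  have ep : 0 < expR t by apply: expR_gt0.
  rewrite -(ler_pM2r ep) mulVf ?gt_eqF //; lra.
have et0 : 0 <= expR (- t) by apply: expR_ge0.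
have hpb : 0 <= 1 + p * (expR (- t) - 1).
  have : p <= 1.
    rewrite -h1 [X in _ <= X](bigID A) /= lerDl; apply: sumr_ge0 => *; exact: r0.
  have : 0 <= p * (expR (- t)) by apply: mulr_ge0.
  nra.
apply: le_trans (ler_wpM2l (expR_ge0 _) (@pow_exp_bound R _ N hpb)) _.
rewrite -expRD ler_expR -/mu.
have : mu * (expR (-t) - 1) <= mu * (13/24 - 1) by apply: ler_wpM2l => //; lra.
rewrite /mu /t; lra.
Qed.

Lemma pow_unit (R : realType) (c : R) (k : nat) : 0 <= c <= 1 -> 0 <= c ^+ k <= 1.
Proof. move=> /andP[h0 h1]; rewrite exprn_ge0 // exprn_ile1 //. Qed.

Lemma Cconst_ge0 (R : realType) : 0 <= Cconst R.
Proof.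
rewrite /Cconst; apply: lb_le_inf.
  exists ((1 - (2 * 1%:R)^-1) ^+ 1); exists 1%N => //.
move=> _ [k' /= k0 <-]; apply: exprn_ge0.
rewrite subr_ge0 invf_le1; last by rewrite mulr_gt0 // ltr0n.
have : (1 <= k'%:R :> R) by rewrite ler1n.
lra.
Qed.

Lemma Cconst_le (R : realType) (k : nat) : (1 <= k)%N ->
  Cconst R <= (1 - (2 * k%:R)^-1) ^+ k.
Proof.
move=> hk; rewrite /Cconst; apply: ge_inf; last by exists k.
exists 0 => _ [k' /= k0 <-]; apply: exprn_ge0.
rewrite subr_ge0 invf_le1; last by rewrite mulr_gt0 // ltr0n.
have : (1 <= k'%:R :> R) by rewrite ler1n.
lra.
Qed.

Lemma Cbar_ge (R : realType) (k : nat) : (1 <= k)%N ->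
  (1 - (4 * k%:R)^-1) ^+ k <= Cbar R.
Proof.
move=> hk; rewrite /Cbar; apply: ub_le_sup; last by exists k.
exists 1 => _ [k' /= k0 <-]; apply: exprn_ile1.
  rewrite subr_ge0 invf_le1; last by rewrite mulr_gt0 // ltr0n.
  have : (1 <= k'%:R :> R) by rewrite ler1n.
  lra.
rewrite gerBl invr_ge0; apply: mulr_ge0 => //.
Qed.

Lemma count_Xc (R : realType) nR N (s : {ffun 'I_N -> 'I_nR}) r :
  (count_lab s r)%:R = Xc (pred1 r) s :> R.
Proof.
rewrite /count_lab /Xc -sum1_card natr_sum big_mkcond /=.
apply: eq_bigr => j _; rewrite unfold_in /=; by case: asboolP; case: (s j == r).
Qed.

Lemma sum_Xc (R : realType) nR N (s : {ffun 'I_N -> 'I_nR}) (A : pred 'I_nR) :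
  \sum_(r | A r) Xc (pred1 r) s = Xc A s :> R.
Proof.
rewrite /Xc exchange_big /=; apply: eq_bigr => j _.
case hA: (A (s j)).
  rewrite (bigD1 (s j)) //= eqxx big1 ?addr0 // => r /andP[_ hr].
  by rewrite eq_sym (negbTE hr).
rewrite big1 // => r hr; case: eqP => // e; by rewrite -e hA in hr.
Qed.

Lemma sum_rhohat (R : realType) nR N (s : {ffun 'I_N -> 'I_nR}) (A : pred 'I_nR) :
  \sum_(r | A r) @rhohat R _ _ s r = Xc A s / N%:R.
Proof. by rewrite /rhohat -mulr_suml; under eq_bigr do rewrite count_Xc; rewrite sum_Xc. Qed.

Lemma XcT (R : realType) nR N (s : {ffun 'I_N -> 'I_nR}) : Xc predT s = N%:R :> R.
Proof. by rewrite /Xc /= sumr_const card_ord. Qed.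

Lemma Xc_ge0 (R : realType) nR N (s : {ffun 'I_N -> 'I_nR}) A : 0 <= Xc A s :> R.
Proof. by apply: sumr_ge0 => j _; rewrite ler0n. Qed.

Lemma Xc_leT (R : realType) nR N (s : {ffun 'I_N -> 'I_nR}) A : Xc A s <= Xc predT s :> R.
Proof. by apply: ler_sum => j _; case: (A (s j)). Qed.

Lemma rhohat_props (R : realType) nR N (s : {ffun 'I_N -> 'I_nR}) : (0 < N)%N ->
  (forall r, 0 <= @rhohat R _ _ s r <= 1) /\ \sum_r @rhohat R _ _ s r = 1.
Proof.
move=> N0; have Np : 0 < N%:R :> R by rewrite ltr0n.
split.
  move=> r; rewrite /rhohat count_Xc divr_ge0 ?Xc_ge0 ?ler0n //=.
  by rewrite ler_pdivrMr // mul1r -(XcT R nR N s) Xc_leT.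
have := sum_rhohat R nR N s predT; rewrite XcT divff ?gt_eqF //.
Qed.

Definition Sf {R : realType} {nR : nat} (k : nat) (p : 'I_nR -> R) : R :=
  \sum_(r < nR) p r * (1 - p r) ^+ k.

Lemma tauf_S (R : realType) nR k (p : 'I_nR -> R) : 1 - tauf k p = Sf k p.
Proof. by rewrite /tauf /Sf opprB addrC subrK. Qed.

Lemma Sf_lb (R : realType) nR k (p : 'I_nR -> R) (A : pred 'I_nR) (a : R) :
  (forall r, 0 <= p r <= 1) -> a <= 1 -> (forall r, A r -> p r <= a) ->
  (1 - a) ^+ k * \sum_(r | A r) p r <= Sf k p.
Proof.
move=> hp a1 hA; rewrite /Sf [X in _ <= X](bigID A) /= mulr_sumr.
apply: le_trans (_ : _ <= \sum_(i | A i) p i * (1 - p i) ^+ k + 0) _.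
  rewrite addr0; apply: ler_sum => r hr; rewrite mulrC; apply: ler_wpM2l.
    by case/andP: (hp r).
  have h := hA r hr; case/andP: (hp r) => h0 h1.
  apply: lerXn2r; rewrite ?nnegrE; lra.
rewrite lerD2l; apply: sumr_ge0 => r _; case/andP: (hp r) => h0 h1.
apply: mulr_ge0 => //; apply: exprn_ge0; lra.
Qed.

Lemma Sf_ub (R : realType) nR k (p : 'I_nR -> R) (a : R) :
  (forall r, 0 <= p r <= 1) -> 0 <= a <= 1 ->
  Sf k p <= \sum_(r | p r <= a) p r + (1 - a) ^+ k * \sum_(r | ~~ (p r <= a)) p r.
Proof.
move=> hp /andP[a0 a1]; rewrite /Sf (bigID (fun r => p r <= a)) /= mulr_sumr.
apply: lerD; apply: ler_sum => r hr; case/andP: (hp r) => h0 h1.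
  rewrite -[X in _ <= X]mulr1; apply: ler_wpM2l => //; apply: exprn_ile1; lra.
rewrite [X in _ <= X]mulrC; apply: ler_wpM2l => //.
move: hr; rewrite -ltNge => hr; apply: lerXn2r; rewrite ?nnegrE; lra.
Qed.

Lemma gammaf_ub (R : realType) nR k (p : 'I_nR -> R) (a : R) :
  (forall r, 0 <= p r <= 1) -> \sum_r p r = 1 -> 0 < a -> a^-1 <= 1 ->
  Sf k p <= gammaf a p + (1 - gammaf a p) * (1 - a^-1) ^+ k.
Proof.
move=> hp h1 a0 a1.
have : Sf k p <= \sum_(r | p r <= a^-1) p r + (1 - a^-1) ^+ k * \sum_(r | ~~ (p r <= a^-1)) p r.
  apply: Sf_ub => //; rewrite a1 andbT invr_ge0 ltW //.
have -> : \sum_(r | ~~ (p r <= a^-1)) p r = 1 - gammaf a p.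
  rewrite -h1 [X in _ = X - _](bigID (fun r => p r <= a^-1)) /= /gammaf; ring.
by rewrite /gammaf [(1 - _) * _]mulrC.
Qed.

Lemma key_ratio (R : realType) (C Cb g T : R) : 0 < g -> 0 <= Cb -> g <= 1 ->
  T <= g + (1 - g) * Cb -> 0 <= C ->
  C / 2 * (1 + (1 - g) / g * Cb)^-1 * T <= C / 2 * g.
Proof.
move=> g0 Cb0 g1 hT C0.
have D0 : 0 <= (1 - g) * Cb by apply: mulr_ge0; lra.
have -> : 1 + (1 - g) / g * Cb = (g + (1 - g) * Cb) / g.
  by field; rewrite gt_eqF.
rewrite invf_div -mulrA; apply: ler_wpM2l; first lra.
have Dp : 0 < g + (1 - g) * Cb by lra.
rewrite mulrAC ler_pdivrMr // ler_pM2l //.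
Qed.
Lemma ind01 {T : Type} {R : realType} (E : T -> Prop) s : 0 <= @ind T R E s <= 1.
Proof. by rewrite /ind; case: asboolP => _; rewrite ?lexx ?ler01. Qed.

Lemma iid_prob_compl (R : realType) nR N (rho : 'I_nR -> R) (E : {ffun 'I_N -> 'I_nR} -> Prop) :
  \sum_r rho r = 1 ->
  iid_prob N rho E = 1 - iid_prob N rho (fun s => ~ E s).
Proof.
move=> h1.
suff : iid_prob N rho E + iid_prob N rho (fun s => ~ E s) = 1 by lra.
rewrite !iid_probE -big_split /= -[RHS](iid_prob_total R nR N rho h1).
apply: eq_bigr => s _; rewrite -mulrDr /ind; case: asboolP => e; case: asboolP => ne;
  rewrite ?addr0 ?add0r ?mulr1 //; tauto.
Qed.

Lemma iid_prob_le_ind (R : realType) nR N (rho : 'I_nR -> R)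
  (E : {ffun 'I_N -> 'I_nR} -> Prop) (F : 'I_nR -> {ffun 'I_N -> 'I_nR} -> Prop) G :
  (forall r, 0 <= rho r) ->
  (forall s, E s -> G s \/ exists r, F r s) ->
  iid_prob N rho E <= iid_prob N rho G + \sum_r iid_prob N rho (F r).
Proof.
move=> r0 hE; rewrite !iid_probE.
under [X in _ <= _ + X]eq_bigr do rewrite iid_probE.
rewrite exchange_big /= -big_split /=; apply: ler_sum => s _.
rewrite -mulr_sumr -mulrDr; apply: ler_wpM2l; first by apply: prodr_ge0.
rewrite {1}/ind; case: asboolP => [/hE [hG|[r hr]]|_].
- rewrite /ind; case: asboolP => // _; rewrite lerDl; apply: sumr_ge0 => r _.
  by case/andP: (@ind01 _ R (F r) s).
- rewrite (bigD1 r) //= {2}/ind; case: asboolP => // _.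
  have := @ind01 _ R G s; have : 0 <= \sum_(i | i != r) @ind _ R (F i) s.
    by apply: sumr_ge0 => i _; case/andP: (@ind01 _ R (F i) s).
  lra.
- apply: addr_ge0; first by case/andP: (@ind01 _ R G s).
  by apply: sumr_ge0 => r _; case/andP: (@ind01 _ R (F r) s).
Qed.

Lemma iid_prob_mono (R : realType) nR N (rho : 'I_nR -> R)
  (E F : {ffun 'I_N -> 'I_nR} -> Prop) :
  (forall r, 0 <= rho r) -> (forall s, E s -> F s) ->
  iid_prob N rho E <= iid_prob N rho F.
Proof.
move=> r0 h; rewrite !iid_probE; apply: ler_sum => s _; apply: ler_wpM2l.
  by apply: prodr_ge0.
rewrite /ind; case: asboolP => [/h e|_]; case: asboolP => //; by rewrite ?ler01.
Qed.

Lemma iid_prob_false (R : realType) nR N (rho : 'I_nR -> R)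
  (E : {ffun 'I_N -> 'I_nR} -> Prop) : (forall s, ~ E s) -> iid_prob N rho E = 0.
Proof.
move=> h; rewrite iid_probE big1 // => s _; rewrite /ind; case: asboolP => [/h //|_].
by rewrite mulr0.
Qed.

Lemma sub_sum (R : realType) n (f : 'I_n -> R) (P Q : pred 'I_n) :
  (forall r, 0 <= f r) -> (forall r, P r -> Q r) ->
  \sum_(r | P r) f r <= \sum_(r | Q r) f r.
Proof.
move=> f0 h; rewrite [X in X <= _]big_mkcond [X in _ <= X]big_mkcond /=.
apply: ler_sum => r _; case hP: (P r); first by rewrite h.
by case: (Q r).
Qed.

Lemma exp_ln_le (R : realType) (x y : R) : 0 < x -> ln x <= y -> expR (- y) <= x^-1.
Proof.
move=> x0 hy; rewrite -[X in _ <= X^-1](lnK x0) -expRN ler_expR; lra.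
Qed.

Lemma compl_bound (R : realType) nR N (rho : 'I_nR -> R) (E : {ffun 'I_N -> 'I_nR} -> Prop) (D : R) :
  \sum_r rho r = 1 -> iid_prob N rho (fun s => ~ E s) <= D -> 1 - D <= iid_prob N rho E.
Proof. move=> h1 h; rewrite (iid_prob_compl R nR N rho E h1); lra. Qed.

Lemma part1 (R : realType) (nR : nat) (rho : 'I_nR -> R)
  (k N : nat) (Delta : R) :
  (2 <= nR)%N ->
  (forall r, 0 < rho r) ->
  \sum_(r < nR) rho r = 1 ->
  (1 <= k)%N ->
  0 < Delta < 1 ->
  (0 < gammaf (4 * k%:R) rho ->
   8 * (gammaf (4 * k%:R) rho)^-1 * ln (2 / Delta)
     + 12 * k%:R * ln (2 * nR%:R / Delta) <= N%:R ->
   1 - Delta <= iid_prob N rho (fun s =>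
     Cconst R / 2
       * (1 + (1 - gammaf (4 * k%:R) rho) / gammaf (4 * k%:R) rho * Cbar R)^-1
       * (1 - tauf k rho)
     <= 1 - tauf k (@rhohat R _ _ s))).
Proof.
move=> hnR rpos h1 hk /andP[D0 D1].
have r0 : forall r, 0 <= rho r by move=> r; apply: ltW.
have kpos : 0 < k%:R :> R by rewrite ltr0n.
have k1 : 1 <= k%:R :> R by rewrite ler1n.
have sum_le1 : forall P : pred 'I_nR, \sum_(r | P r) rho r <= 1.
  by move=> P; rewrite -h1; apply: sub_sum.
have rho1 : forall r, 0 <= rho r <= 1.
  move=> r; rewrite r0 /=; have := sum_le1 (pred1 r); by rewrite big_pred1_eq.
have nRpos : 2 <= nR%:R :> R by rewrite ler_nat.
have L1pos : 0 < ln (2 / Delta).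
  apply: ln_gt0; rewrite ltr_pdivlMr //; lra.
have L2pos : 0 < ln (2 * nR%:R / Delta).
  apply: ln_gt0; rewrite ltr_pdivlMr //; lra.
have eL1 : forall y, ln (2 / Delta) <= y -> expR (- y) <= Delta / 2.
  move=> y hy; rewrite -invf_div; apply: exp_ln_le => //; apply: divr_gt0 => //; lra.
have eL2 : forall y, ln (2 * nR%:R / Delta) <= y -> expR (- y) <= Delta / (2 * nR%:R).
  move=> y hy; rewrite -invf_div; apply: exp_ln_le => //; apply: divr_gt0 => //; lra.
have Cc0 := Cconst_ge0 R.
have Ccle := Cconst_le R k hk.
have Cbge := Cbar_ge R k hk.
have i4 : (4 * k%:R)^-1 <= 1 :> R by rewrite invf_le1; lra.
have i4p : 0 < (4 * k%:R)^-1 :> R by rewrite invr_gt0; lra.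
have i2 : (2 * k%:R)^-1 <= 1 :> R by rewrite invf_le1; lra.
have i2p : 0 < (2 * k%:R)^-1 :> R by rewrite invr_gt0; lra.
have c4 : 0 <= ((1 - (4 * k%:R)^-1) ^+ k : R) <= 1.
  by rewrite exprn_ge0 ?exprn_ile1 //; lra.
have c2 : 0 <= ((1 - (2 * k%:R)^-1) ^+ k : R) <= 1.
  by rewrite exprn_ge0 ?exprn_ile1 //; lra.
move=> g0 HN.
set g := gammaf (4 * k%:R) rho in g0 HN *.
have g1 : g <= 1 by apply: sum_le1.
have HN1 : 8 * ln (2 / Delta) <= N%:R * g.
  have : 8 * g^-1 * ln (2 / Delta) * g <= N%:R * g.
    apply: ler_wpM2r; first lra.
    have : 0 <= 12 * k%:R * ln (2 * nR%:R / Delta) by apply: mulr_ge0; lra.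
    lra.
  have -> : 8 * g^-1 * ln (2 / Delta) * g = 8 * ln (2 / Delta) by field; rewrite gt_eqF.
  done.
have HN2 : 12 * k%:R * ln (2 * nR%:R / Delta) <= N%:R.
  have : 0 <= 8 * g^-1 * ln (2 / Delta).
    by apply: mulr_ge0; [apply: mulr_ge0; [lra|]; rewrite invr_ge0; lra | lra].
  lra.
have Np : 0 < N%:R :> R.
  have : 0 < 12 * k%:R * ln (2 * nR%:R / Delta) by apply: mulr_gt0 => //; lra.
  lra.
have Npos : (0 < N)%N by rewrite -(ltr0n R).
pose A : pred 'I_nR := fun r => rho r <= (4 * k%:R)^-1.
pose Bad1 := fun s : {ffun 'I_N -> 'I_nR} => (Xc A s : R) <= N%:R * (\sum_(r | A r) rho r) / 2.
pose Bad2 := fun r (s : {ffun 'I_N -> 'I_nR}) =>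
  rho r <= (4 * k%:R)^-1 /\ 2 * (N%:R / (4 * k%:R)) < (Xc (pred1 r) s : R).
have P1 : iid_prob N rho Bad1 <= Delta / 2.
  apply: le_trans (chernoff_low R nR N rho A r0 h1) _.
  apply: eL1; rewrite (_ : \sum_(r | A r) rho r = g) //; lra.
have P2 : forall r, iid_prob N rho (Bad2 r) <= Delta / (2 * nR%:R).
  move=> r; case: (boolP (rho r <= (4 * k%:R)^-1)) => hr.
    apply: le_trans (@iid_prob_mono R nR N rho (Bad2 r)
      (fun s => 2 * (N%:R / (4 * k%:R)) <= Xc (pred1 r) s) r0 _) _.
      move=> s; rewrite /Bad2 => -[_ hs]; exact: (ltW hs).
    apply: le_trans (chernoff_up R nR N rho (pred1 r) (N%:R / (4 * k%:R)) r0 h1 _ _) _.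
    - by apply: divr_ge0; lra.
    - rewrite big_pred1_eq; apply: ler_wpM2l; lra.
    apply: eL2.
    have -> : N%:R / (4 * k%:R) / 3 = N%:R / (12 * k%:R) :> R.
      by field; rewrite gt_eqF.
    rewrite ler_pdivlMr; last lra.
    by rewrite mulrC.
  rewrite iid_prob_false; first by apply: divr_ge0; lra.
  by move=> s; rewrite /Bad2 => -[hs _]; rewrite hs in hr.
rewrite iid_prob_compl //.
suff : iid_prob N rho (fun s => ~ (Cconst R / 2
       * (1 + (1 - g) / g * Cbar R)^-1
       * (1 - tauf k rho)
     <= 1 - tauf k (@rhohat R _ _ s))) <= Delta by lra.
apply: le_trans (@iid_prob_le_ind R nR N rho _ Bad2 Bad1 r0 _) _; last first.
  have : \sum_r iid_prob N rho (Bad2 r) <= \sum_(r < nR) (Delta / (2 * nR%:R)).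
    by apply: ler_sum => r _; apply: P2.
  rewrite sumr_const card_ord -[_ *+ nR]mulr_natr.
  have -> : Delta / (2 * nR%:R) * nR%:R = Delta / 2 by field; lra.
  lra.
move=> s hs.
have [b1|nb1] := pselect (Bad1 s); first by left.
have [[r br]|nbr] := pselect (exists r, Bad2 r s); first by right; exists r.
exfalso; apply: hs.
have [rh01 rh1] := @rhohat_props R nR N s Npos.
set rh := @rhohat R _ _ s in rh01 rh1 *.
have hA : forall r, A r -> rh r <= (2 * k%:R)^-1.
  move=> r hr; rewrite /rh /rhohat count_Xc.
  have : (Xc (pred1 r) s : R) <= 2 * (N%:R / (4 * k%:R)).
    by rewrite leNgt; apply/negP => hh; apply: nbr; exists r.
  move=> hx; rewrite ler_pdivrMr //; apply: le_trans hx _.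
  rewrite le_eqVlt; apply/orP; left; apply/eqP; field; rewrite !gt_eqF //; lra.
have hSA : g / 2 < \sum_(r | A r) rh r.
  rewrite sum_rhohat ltr_pdivlMr //.
  have hx : N%:R * g / 2 < (Xc A s : R).
    by rewrite ltNge; apply/negP => hh; apply: nb1; exact: hh.
  by rewrite (_ : g / 2 * N%:R = N%:R * g / 2) //; ring.
have hS := Sf_lb R nR k rh A (2 * k%:R)^-1 rh01 i2 hA.
have k4 : 0 < 4 * k%:R :> R by lra.
have hT := gammaf_ub R nR k rho (4 * k%:R) rho1 h1 k4 i4.
rewrite !tauf_S.
apply: le_trans (key_ratio R (Cconst R) (Cbar R) g (Sf k rho) g0 _ g1 _ Cc0) _.
- by case/andP: c4 => c40 _; apply: le_trans Cbge.
- rewrite -/g in hT; apply: le_trans hT _; rewrite lerD2l; apply: ler_wpM2l => //; lra.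
case/andP: c2 => c20 c21.
have : Cconst R * g <= (1 - (2 * k%:R)^-1) ^+ k * g by apply: ler_wpM2r; lra.
have : (1 - (2 * k%:R)^-1) ^+ k * (g / 2) <= (1 - (2 * k%:R)^-1) ^+ k * \sum_(r | A r) rh r.
  by apply: ler_wpM2l => //; lra.
lra.
Qed.

Lemma part2 (R : realType) (nR : nat) (rho : 'I_nR -> R)
  (k N : nat) (Delta : R) :
  (2 <= nR)%N ->
  (forall r, 0 < rho r) ->
  \sum_(r < nR) rho r = 1 ->
  (1 <= k)%N ->
  0 < Delta < 1 ->
  (0 < gammaf (2 * k%:R) rho ->
   3 * (gammaf (2 * k%:R) rho)^-1 * ln (2 / Delta)
     + 16 * k%:R * ln (2 * nR%:R / Delta) <= N%:R ->
   1 - Delta <= iid_prob N rho (fun s =>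
     (if gammaf (4 * k%:R) (@rhohat R _ _ s) == 0 then 0 else
      Cconst R / 2
       * (1 + (1 - gammaf (4 * k%:R) (@rhohat R _ _ s)) / gammaf (4 * k%:R) (@rhohat R _ _ s)
                * Cbar R)^-1
       * (1 - tauf k (@rhohat R _ _ s)))
     <= 1 - tauf k rho)).
Proof.
move=> hnR rpos h1 hk /andP[D0 D1].
have r0 : forall r, 0 <= rho r by move=> r; apply: ltW.
have kpos : 0 < k%:R :> R by rewrite ltr0n.
have k1 : 1 <= k%:R :> R by rewrite ler1n.
have sum_le1 : forall P : pred 'I_nR, \sum_(r | P r) rho r <= 1.
  by move=> P; rewrite -h1; apply: sub_sum.
have rho1 : forall r, 0 <= rho r <= 1.
  move=> r; rewrite r0 /=; have := sum_le1 (pred1 r); by rewrite big_pred1_eq.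
have nRpos : 2 <= nR%:R :> R by rewrite ler_nat.
have L1pos : 0 < ln (2 / Delta).
  apply: ln_gt0; rewrite ltr_pdivlMr //; lra.
have L2pos : 0 < ln (2 * nR%:R / Delta).
  apply: ln_gt0; rewrite ltr_pdivlMr //; lra.
have eL1 : forall y, ln (2 / Delta) <= y -> expR (- y) <= Delta / 2.
  move=> y hy; rewrite -invf_div; apply: exp_ln_le => //; apply: divr_gt0 => //; lra.
have eL2 : forall y, ln (2 * nR%:R / Delta) <= y -> expR (- y) <= Delta / (2 * nR%:R).
  move=> y hy; rewrite -invf_div; apply: exp_ln_le => //; apply: divr_gt0 => //; lra.
have Cc0 := Cconst_ge0 R.
have Ccle := Cconst_le R k hk.
have Cbge := Cbar_ge R k hk.
have i4 : (4 * k%:R)^-1 <= 1 :> R by rewrite invf_le1; lra.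
have i4p : 0 < (4 * k%:R)^-1 :> R by rewrite invr_gt0; lra.
have i2 : (2 * k%:R)^-1 <= 1 :> R by rewrite invf_le1; lra.
have i2p : 0 < (2 * k%:R)^-1 :> R by rewrite invr_gt0; lra.
have c4 : 0 <= ((1 - (4 * k%:R)^-1) ^+ k : R) <= 1.
  by rewrite exprn_ge0 ?exprn_ile1 //; lra.
have c2 : 0 <= ((1 - (2 * k%:R)^-1) ^+ k : R) <= 1.
  by rewrite exprn_ge0 ?exprn_ile1 //; lra.
move=> g0 HN.
set g := gammaf (2 * k%:R) rho in g0 HN *.
have g1 : g <= 1 by apply: sum_le1.
have HN1 : 3 * ln (2 / Delta) <= N%:R * g.
  have : 3 * g^-1 * ln (2 / Delta) * g <= N%:R * g.
    apply: ler_wpM2r; first lra.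
    have : 0 <= 16 * k%:R * ln (2 * nR%:R / Delta) by apply: mulr_ge0; lra.
    lra.
  have -> : 3 * g^-1 * ln (2 / Delta) * g = 3 * ln (2 / Delta) by field; rewrite gt_eqF.
  done.
have HN2 : 16 * k%:R * ln (2 * nR%:R / Delta) <= N%:R.
  have : 0 <= 3 * g^-1 * ln (2 / Delta).
    by apply: mulr_ge0; [apply: mulr_ge0; [lra|]; rewrite invr_ge0; lra | lra].
  lra.
have Np : 0 < N%:R :> R.
  have : 0 < 16 * k%:R * ln (2 * nR%:R / Delta) by apply: mulr_gt0 => //; lra.
  lra.
have Npos : (0 < N)%N by rewrite -(ltr0n R).
pose B : pred 'I_nR := fun r => rho r <= (2 * k%:R)^-1.
pose Bad1 := fun s : {ffun 'I_N -> 'I_nR} => 2 * (N%:R * (\sum_(r | B r) rho r)) <= (Xc B s : R).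
pose Bad2 := fun r (s : {ffun 'I_N -> 'I_nR}) =>
  (2 * k%:R)^-1 < rho r /\ (Xc (pred1 r) s : R) <= N%:R / (4 * k%:R).
have P1 : iid_prob N rho Bad1 <= Delta / 2.
  apply: le_trans (chernoff_up R nR N rho B (N%:R * (\sum_(r | B r) rho r)) r0 h1 _ _) _.
  - by apply: mulr_ge0; [lra|apply: sumr_ge0].
  - by [].
  apply: eL1; rewrite (_ : \sum_(r | B r) rho r = g) //; lra.
have P2 : forall r, iid_prob N rho (Bad2 r) <= Delta / (2 * nR%:R).
  move=> r; case: (boolP ((2 * k%:R)^-1 < rho r)) => hr.
    apply: le_trans (@iid_prob_mono R nR N rho (Bad2 r)
      (fun s => (Xc (pred1 r) s : R) <= N%:R * (\sum_(i | pred1 r i) rho i) / 2) r0 _) _.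
      move=> s; rewrite /Bad2 => -[_ hs]; apply: le_trans hs _.
      rewrite big_pred1_eq -mulrA; apply: ler_wpM2l; first lra.
      have -> : (4 * k%:R)^-1 = (2 * k%:R)^-1 / 2 :> R by field; lra.
      lra.
    apply: le_trans (chernoff_low R nR N rho (pred1 r) r0 h1) _.
    apply: le_trans (eL2 (N%:R / (16 * k%:R)) _).
      rewrite ler_expR lerN2 big_pred1_eq.
      have -> : N%:R / (16 * k%:R) = N%:R * ((2 * k%:R)^-1 / 8) :> R by field; lra.
      rewrite -mulrA ler_wpM2l; lra.
    rewrite ler_pdivlMr; last lra.
    by rewrite mulrC.
  rewrite iid_prob_false; first by apply: divr_ge0; lra.
  by move=> s; rewrite /Bad2 => -[hs _]; rewrite hs in hr.
apply: compl_bound => //.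
apply: le_trans (@iid_prob_le_ind R nR N rho _ Bad2 Bad1 r0 _) _; last first.
  have : \sum_r iid_prob N rho (Bad2 r) <= \sum_(r < nR) (Delta / (2 * nR%:R)).
    by apply: ler_sum => r _; apply: P2.
  rewrite sumr_const card_ord -[_ *+ nR]mulr_natr.
  have -> : Delta / (2 * nR%:R) * nR%:R = Delta / 2 by field; lra.
  lra.
move=> s hs.
have [b1|nb1] := pselect (Bad1 s); first by left.
have [[r br]|nbr] := pselect (exists r, Bad2 r s); first by right; exists r.
exfalso; apply: hs.
have [rh01 rh1] := @rhohat_props R nR N s Npos.
set rh := @rhohat R _ _ s in rh01 rh1 *.
have rh0 : forall r, 0 <= rh r by move=> r; case/andP: (rh01 r).
have hB : forall r, rh r <= (4 * k%:R)^-1 -> B r.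
  move=> r hr; rewrite /B; rewrite leNgt; apply/negP => hlt.
  have : N%:R / (4 * k%:R) < (Xc (pred1 r) s : R).
    by rewrite ltNge; apply/negP => hh; apply: nbr; exists r.
  move: hr; rewrite /rh /rhohat count_Xc ler_pdivrMr // => hr hx.
  have : N%:R / (4 * k%:R) = (4 * k%:R)^-1 * N%:R :> R by rewrite mulrC.
  lra.
have hsum : \sum_(r | B r) rh r < 2 * g.
  rewrite sum_rhohat ltr_pdivrMr //.
  have hx : (Xc B s : R) < 2 * (N%:R * g).
    by rewrite ltNge; apply/negP => hh; apply: nb1; exact: hh.
  by rewrite (_ : 2 * g * N%:R = 2 * (N%:R * g)) //; ring.
have gh := sub_sum R nR rh (fun r => rh r <= (4 * k%:R)^-1) B rh0 hB.
set gh' := \sum_(r | rh r <= (4 * k%:R)^-1) rh r in gh.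
have egh : gammaf (4 * k%:R) rh = gh' by [].
rewrite egh !tauf_S.
have hS := Sf_lb R nR k rho B (2 * k%:R)^-1 rho1 i2 (fun r h => h).
case: ifP => hg.
  rewrite /Sf; apply: sumr_ge0 => r _; case/andP: (rho1 r) => a b; apply: mulr_ge0 => //.
  apply: exprn_ge0; lra.
have gh0 : 0 <= gh' by apply: sumr_ge0.
have ghp : 0 < gh' by rewrite lt_def hg gh0.
have gh1 : gh' <= 1 by rewrite -rh1; apply: sub_sum.
have k4 : 0 < 4 * k%:R :> R by lra.
have hT := gammaf_ub R nR k rh (4 * k%:R) rh01 rh1 k4 i4.
rewrite egh in hT.

apply: le_trans (key_ratio R (Cconst R) (Cbar R) gh' (Sf k rh) ghp _ gh1 _ Cc0) _.
- by case/andP: c4 => c40 _; apply: le_trans Cbge.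
- apply: le_trans hT _; rewrite lerD2l; apply: ler_wpM2l => //; lra.
case/andP: c2 => c20 c21.
have : Cconst R * gh' <= Cconst R * (2 * g) by apply: ler_wpM2l => //; lra.
have : Cconst R * g <= (1 - (2 * k%:R)^-1) ^+ k * g by apply: ler_wpM2r; lra.
rewrite (_ : Cconst R / 2 * gh' = (Cconst R * gh') / 2); last by ring.
rewrite (_ : Cconst R * (2 * g) = 2 * (Cconst R * g)); last by ring.
have : (1 - (2 * k%:R)^-1) ^+ k * g <= Sf k rho by [].
lra.
Qed.

Theorem mainTheorem2 (R : realType) (nR : nat) (rho : 'I_nR -> R)
  (k N : nat) (Delta : R) :
  (2 <= nR)%N ->
  (forall r, 0 < rho r) ->
  \sum_(r < nR) rho r = 1 ->
  (1 <= k)%N ->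
  0 < Delta < 1 ->
  (* (i) *)
  (0 < gammaf (4 * k%:R) rho ->
   8 * (gammaf (4 * k%:R) rho)^-1 * ln (2 / Delta)
     + 12 * k%:R * ln (2 * nR%:R / Delta) <= N%:R ->
   1 - Delta <= iid_prob N rho (fun s =>
     Cconst R / 2
       * (1 + (1 - gammaf (4 * k%:R) rho) / gammaf (4 * k%:R) rho * Cbar R)^-1
       * (1 - tauf k rho)
     <= 1 - tauf k (@rhohat R _ _ s)))
  /\
  (* (ii) *)
  (0 < gammaf (2 * k%:R) rho ->
   3 * (gammaf (2 * k%:R) rho)^-1 * ln (2 / Delta)
     + 16 * k%:R * ln (2 * nR%:R / Delta) <= N%:R ->
   1 - Delta <= iid_prob N rho (fun s =>
     (if gammaf (4 * k%:R) (@rhohat R _ _ s) == 0 then 0 else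
      Cconst R / 2
       * (1 + (1 - gammaf (4 * k%:R) (@rhohat R _ _ s)) / gammaf (4 * k%:R) (@rhohat R _ _ s)
                * Cbar R)^-1
       * (1 - tauf k (@rhohat R _ _ s)))
     <= 1 - tauf k rho)).
Proof.
move=> a b c d e; split.
  exact: (@part1 R nR rho k N Delta a b c d e).
exact: (@part2 R nR rho k N Delta a b c d e).
Qed.
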